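(* For $p_1,\dots,p_n\in[0,1]$, the tuple $(B_{p_1},\dots,B_{p_n})$ is jointly mixable if and only if $\sum_{i=1}^n p_i$ is an integer.
   Context: Work on an atomless probability space. $B_p$ denotes the Bernoulli distribution with mean $p$. An $n$-tuple of cdfs $\mathbf F=(F_1,\dots,F_n)$ is jointly mixable if the set $\{\text{cdf of }X_1+\dots+X_n:X_i\sim F_i\}$ contains a point mass $\delta_x$ for some $x\in\mathbb{R}$ (equivalently, there exist $X_i\sim F_i$ with $X_1+\dots+X_n$ almost surely constant). *)

(* Defs.v *)
From HB Require Import structures.
From mathcomp Require Import all_boot all_order all_algebra.
From mathcomp Require Import all_classical all_reals all_analysis.
Set Implicit Arguments. Unset Strict Implicit. Unset Printing Implicit Defensive.
Import Order.TTheory GRing.Theory Num.Theory.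
Local Open Scope classical_set_scope.
Local Open Scope ring_scope.

Definition atomless d (T : measurableType d) (R : realType) (P : probability T R) : Prop :=
  forall A : set T, measurable A -> (0 < P A)%E ->
    exists B : set T, [/\ measurable B, B `<=` A & (0 < P B < P A)%E].

Definition bernoulli_cdf (R : realType) (p : R) (x : R) : R :=
  if x < 0 then 0 else if x < 1 then 1 - p else 1.

Definition jointly_mixable d (T : measurableType d) (R : realType)
  (P : probability T R) (n : nat) (F : 'I_n -> R -> R) : Prop :=
  exists X : 'I_n -> {RV P >-> R},
    (forall i x, cdf (X i) x = (F i x)%:E) /\
    exists c : R, P [set w | \sum_(i < n) X i w = c] = 1%E.

(* Main.v *)
Require Import Defs.
From HB Require Import structures.
From mathcomp Require Import all_boot all_order all_algebra.
From mathcomp Require Import all_classical all_reals all_analysis.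
From mathcomp Require Import ring lra zify.
Set Implicit Arguments. Unset Strict Implicit. Unset Printing Implicit Defensive.
Import Order.TTheory GRing.Theory Num.Theory.
Local Open Scope classical_set_scope.
Local Open Scope ring_scope.
Section S.
Context d (T : measurableType d) (R : realType) (P : probability T R).
Definition mu (A : set T) : R := fine (P A).
Lemma PE A : measurable A -> P A = (mu A)%:E.
Proof. by move=> mA; rewrite /mu fineK // fin_num_measure. Qed.
Lemma mu_ge0 A : 0 <= mu A.
Proof. by rewrite /mu fine_ge0. Qed.
Lemma mu_le1 A : measurable A -> mu A <= 1.
Proof. by move=> mA; rewrite -lee_fin -PE // probability_le1. Qed.
Lemma mu_le A B : measurable A -> measurable B -> A `<=` B -> mu A <= mu B.
Proof. by move=> mA mB AB; rewrite -lee_fin -!PE // le_measure // inE. Qed.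
Lemma muU A B : measurable A -> measurable B -> A `&` B = set0 -> mu (A `|` B) = mu A + mu B.
Proof.
move=> mA mB AB; apply/eqP; rewrite -eqe EFinD.
by rewrite -(PE mA) -(PE mB) -(PE (measurableU _ _ mA mB)) measureU.
Qed.
Lemma muD A B : measurable A -> measurable B -> B `<=` A -> mu (A `\` B) = mu A - mu B.
Proof.
move=> mA mB BA; have := muU (measurableD mA mB) mB.
rewrite setDKU // => ->; first by ring.
by rewrite setDE -setIA setICl setI0.
Qed.
Lemma muT : mu setT = 1.
Proof. by rewrite /mu probability_setT. Qed.
Lemma muC A : measurable A -> mu (~` A) = 1 - mu A.
Proof. by move=> mA; rewrite -muT -muD // setTD. Qed.
Lemma mu0 : mu set0 = 0.
Proof. by rewrite /mu measure0. Qed.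

Lemma disjD (A B C : set T) : B `<=` C `\` A -> A `&` B = set0.
Proof. by move=> BC; apply/seteqP; split => x // [xA /BC [_ ]]. Qed.

Hypothesis hP : atomless P.

Lemma half_step C : measurable C -> 0 < mu C ->
  exists B, [/\ measurable B, B `<=` C, 0 < mu B & mu B <= mu C / 2].
Proof.
move=> mC C0.
have h0 : (0 < P C)%E by rewrite PE // lte_fin.
have [B [mB BC /andP[B0 BC']]] := hP mC h0.
rewrite (PE mB) (PE mC) !lte_fin in B0 BC'.
case: (lerP (mu B) (mu C / 2)) => hB; first by exists B.
exists (C `\` B); split.
- exact: measurableD.
- by move=> x [].
- rewrite muD //; lra.
- rewrite muD //; lra.
Qed.

Lemma half_iter A : measurable A -> 0 < mu A -> forall m,
  exists B, [/\ measurable B, B `<=` A, 0 < mu B & mu B <= mu A / 2 ^+ m].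
Proof.
move=> mA A0; elim => [|m [B [mB BA B0 Bm]]].
  by exists A; split => //; rewrite expr0 divr1.
have [B' [mB' B'B B'0 B'm]] := half_step mB B0.
exists B'; split => //; first exact: subset_trans B'B BA.
have -> : mu A / 2 ^+ m.+1 = mu A / 2 ^+ m / 2 by rewrite exprS invfM; ring.
apply: le_trans B'm _; lra.
Qed.

Lemma small_eps A e : measurable A -> 0 < mu A -> 0 < e ->
  exists C, [/\ measurable C, C `<=` A, 0 < mu C & mu C <= e].
Proof.
move=> mA A0 e0.
pose m := Num.Def.archi_bound e^-1.
have hm : e^-1 < m%:R by apply: archi_boundP; rewrite invr_ge0 ltW.
have [C [mC CA C0 Cm]] := half_iter mA A0 m.
exists C; split => //; apply: le_trans Cm _.
have h2 : (m%:R : R) <= 2 ^+ m.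
  by rewrite -natrX ler_nat ltnW // ltn_expl.
have p2 : 0 < (2 : R) ^+ m by rewrite exprn_gt0.
rewrite ler_pdivrMr //.
have : 1 < e * 2 ^+ m.
  by rewrite -ltr_pdivrMl //; lra.
have := mu_le1 mA; nra.
Qed.

Lemma sierpinski E t : measurable E -> 0 <= t -> t <= mu E ->
  exists D, [/\ measurable D, D `<=` E & mu D = t].
Proof.
move=> mE t0 tE.
pose good D := [/\ measurable D, D `<=` E & mu D <= t].
pose S D := [set x | exists B, [/\ measurable B, B `<=` E `\` D, mu D + mu B <= t & x = mu B]].
have step : forall D, exists B, good D -> [/\ measurable B, B `<=` E `\` D, mu D + mu B <= t &
    forall C, measurable C -> C `<=` E `\` D -> mu D + mu C <= t -> mu C <= 2 * mu B].
  move=> D; case: (pselect (good D)) => gD; last by exists set0.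
  case: gD => mD DE Dt.
  have hs : has_sup (S D).
    split; first by exists 0, set0; split => //; rewrite mu0; lra.
    by exists 1 => x [B [mB _ _ ->]]; exact: mu_le1.
  have ub := sup_upper_bound hs.
  case: (lerP (sup (S D)) 0) => s0.
    exists set0 => _; split => //; first by rewrite mu0; lra.
    move=> C mC CE DC; rewrite mu0 mulr0; apply: le_trans (ub _ _) s0.
    by exists C.
  have e0 : 0 < sup (S D) / 2 by rewrite divr_gt0.
  have [x [B [mB BE DB ->]] hx] := sup_adherent e0 hs.
  exists B => _; split => // C mC CE DC.
  have : mu C <= sup (S D) by apply: ub; exists C.
  lra.
have [f hf] := choice step.
pose Dn := fix Dn m := if m is m'.+1 then Dn m' `|` f (Dn m') else set0.
have gDn : forall m, good (Dn m).
  elim => [|m IH] /=; first by split => //; rewrite mu0.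
  have [mB BE DB _] := hf _ IH; case: IH => mD DE Dt.
  split; first exact: measurableU.
    by move=> x [/DE|/BE []].
  by rewrite muU //; apply: disjD BE.
have muS : forall m, mu (Dn m.+1) = mu (Dn m) + mu (f (Dn m)).
  move=> m /=; have [mB BE DB _] := hf _ (gDn m); case: (gDn m) => mD DE Dt.
  by rewrite muU //; apply: disjD BE.
pose Dinf := \bigcup_m Dn m.
have mDn m : measurable (Dn m) by case: (gDn m).
have mDinf : measurable Dinf by apply: bigcupT_measurable.
have DinfE : Dinf `<=` E by move=> x [m _]; case: (gDn m) => _ + _; apply.
have DnDinf m : Dn m `<=` Dinf by move=> x xm; exists m.
have Dinft : mu Dinf <= t.
  have ndD : nondecreasing_seq Dn.
    by apply/nondecreasing_seqP => m; apply/subsetPset => x xm /=; left.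
  have cv := nondecreasing_cvg_mu (mu := P) mDn mDinf ndD.
  rewrite -lee_fin -PE // -(cvg_lim _ cv) //.
  apply: lime_le; first exact: cvgP cv.
  by apply: nearW => m /=; rewrite PE // lee_fin; case: (gDn m).
exists Dinf; split => //; apply/eqP; rewrite eq_le Dinft /=.
rewrite leNgt; apply/negP => lt.
have A0 : 0 < mu (E `\` Dinf) by rewrite muD //; lra.
have tD : 0 < t - mu Dinf by rewrite subr_gt0.
have [C [mC CA C0 Ct]] := small_eps (measurableD mE mDinf) A0 tD.
have key m : mu C <= 2 * mu (f (Dn m)).
  have [_ _ _ +] := hf _ (gDn m); apply => //.
    by move=> x /CA [xE xD]; split => // /DnDinf.
  have := mu_le (mDn m) mDinf (DnDinf m); lra.
have grow m : m%:R * mu C <= 2 * mu (Dn m).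
  elim: m => [|m IH]; first by rewrite mul0r mu0 mulr0.
  rewrite muS -natr1 mulrDl mul1r; have := key m; lra.
pose m := Num.Def.archi_bound (2 / mu C).
have hm : 2 / mu C < m%:R by apply: archi_boundP; rewrite divr_ge0 // ltW.
rewrite ltr_pdivrMr // in hm.
have := grow m; have := mu_le1 (mDn m); lra.
Qed.

Lemma indic_split (A D : set T) w : D `<=` A ->
  (\1_D w : R) + \1_(A `\` D) w = \1_A w.
Proof.
move=> DA; rewrite !indicE in_setD.
case wA: (w \in A); case wD: (w \in D) => //=; rewrite ?addr0 ?add0r //.
all: try by move/set_mem: wD => /DA /mem_set; rewrite wA.
Qed.

Lemma indic_comp (A D : set T) w : D `<=` ~` A ->
  (\1_(A `|` D) w : R) + \1_(A `|` (~` A `\` D)) w = 1 + \1_A w.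
Proof.
move=> DA; rewrite !indicE !in_setU in_setD in_setC.
case wA: (w \in A); case wD: (w \in D) => //=; rewrite ?addr0 ?add0r //.
all: try by move/set_mem: wD => /DA; rewrite -in_setE in_setC wA.
Qed.

Lemma construct n : forall (q : nat -> R) (k : int),
  (forall j, (j <= n)%N -> 0 <= q j <= 1) -> \sum_(j < n.+1) q j = k%:~R ->
  exists A : nat -> set T, (forall j, (j <= n)%N -> measurable (A j) /\ mu (A j) = q j) /\
    forall w, \sum_(j < n.+1) (\1_(A j) w : R) = k%:~R.
Proof.
elim: n => [|n IH] q k hq.
  rewrite big_ord_recl big_ord0 addr0 => q0k.
  have := hq 0%N (leqnn _); rewrite q0k ler0z lerz1 => /andP[k0 k1].
  have [hk|hk] : k = 0 \/ k = 1 by lia.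
  1,2: rewrite hk in q0k *.
  - exists (fun _ => set0); split.
      by move=> j; rewrite leqn0 => /eqP ->; split => //; rewrite mu0 q0k mulr0z.
    by move=> w; rewrite big_ord_recl big_ord0 indicE in_set0 addr0 mulr0z.
  - exists (fun _ => setT); split.
      by move=> j; rewrite leqn0 => /eqP ->; split => //; rewrite muT q0k mulr1z.
    by move=> w; rewrite big_ord_recl big_ord0 indicE in_setT addr0 mulr1z.
rewrite big_ord_recl big_ord_recl.
set rest := \sum_(i < n) _.
have hrest : rest = \sum_(i < n) q i.+2 by apply: eq_bigr => i _; rewrite !lift0.
rewrite hrest /= => hsum.
have [x0 x1] := andP (hq 0%N isT); have [y0 y1] := andP (hq 1%N isT).
have hqS j : (j <= n)%N -> 0 <= q j.+1 <= 1 by move=> jn; apply: hq.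
case: (lerP (q 0%N + q 1%N) 1) => hxy.
  pose q' j := if j is j'.+1 then q j'.+1.+1 else q 0%N + q 1%N.
  have hq' : forall j, (j <= n)%N -> 0 <= q' j <= 1.
    by case => [|j] /= jn; [apply/andP; split; lra | apply: hq].
  have hs' : \sum_(j < n.+1) q' j = k%:~R.
    rewrite big_ord_recl /= -hsum addrA; congr (_ + _).
  have [A' [hA' sA']] := IH q' k hq' hs'.
  have [mA0 muA0] := hA' 0%N isT.
  have hx : q 0%N <= mu (A' 0%N) by rewrite muA0 /=; lra.
  have [D [mD DA tD]] := @sierpinski (A' 0%N) (q 0%N) mA0 x0 hx.
  exists (fun j => match j with 0 => D | 1 => A' 0%N `\` D | j'.+2 => A' j'.+1 end).
  split.
    case => [|[|j]] jn //.
      by split => //; [exact: measurableD | rewrite muD // muA0 tD /=; lra].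
    by have := hA' j.+1 jn.
  move=> w; rewrite big_ord_recl big_ord_recl /= addrA indic_split //.
  rewrite -(sA' w) big_ord_recl; congr (_ + _).
pose q' j := if j is j'.+1 then q j'.+1.+1 else q 0%N + q 1%N - 1.
have hq' : forall j, (j <= n)%N -> 0 <= q' j <= 1.
  by case => [|j] /= jn; [apply/andP; split; lra | apply: hq].
have hs' : \sum_(j < n.+1) q' j = (k - 1)%:~R.
  rewrite big_ord_recl /= intrB -hsum.
  have -> : \sum_(i < n) q' (lift ord0 i) = \sum_(i < n) q i.+2.
    by apply: eq_bigr => i _; rewrite lift0.
  rewrite /=; lra.
have [A' [hA' sA']] := IH q' (k - 1) hq' hs'.
have [mA0 muA0] := hA' 0%N isT.
have mC : measurable (~` A' 0%N) by exact: measurableC.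
have h1 : 0 <= 1 - q 1%N by lra.
have h2 : 1 - q 1%N <= mu (~` A' 0%N) by rewrite muC // muA0 /=; lra.
have [D [mD DA tD]] := @sierpinski (~` A' 0%N) (1 - q 1%N) mC h1 h2.
exists (fun j => match j with 0 => A' 0%N `|` D | 1 => A' 0%N `|` (~` A' 0%N `\` D)
   | j'.+2 => A' j'.+1 end).
split.
  case => [|[|j]] jn //.
  - split; first exact: measurableU.
    rewrite muU ?muA0 ?tD /=; last (by apply: (@disjD _ _ setT) => z /DA); [lra | done | done].
  - have mD' : measurable (~` A' 0%N `\` D) by exact: measurableD.
    split; first exact: measurableU.
    rewrite muU //; last by apply: (@disjD _ _ setT) => z [/= + _].
    by rewrite muD // muC // muA0 tD /=; lra.
  - by have := hA' j.+1 jn.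
move=> w; rewrite big_ord_recl big_ord_recl /= addrA indic_comp //.
rewrite -addrA.
have -> : k%:~R = 1 + (k - 1)%:~R :> R by rewrite intrB; ring.
congr (_ + _); rewrite -(sA' w) big_ord_recl; congr (_ + _).
Qed.

Definition imf (A : set T) (mA : measurable A) : {RV P >-> R} :=
  @measurable_realfun.indic_mfun _ _ R A mA.

Lemma imfE A (mA : measurable A) w : imf mA w = \1_A w.
Proof. by []. Qed.

Lemma cdf_imf A (mA : measurable A) x :
  cdf (imf mA) x = (bernoulli_cdf (mu A) x)%:E.
Proof.
rewrite /cdf /distribution /pushforward /bernoulli_cdf.
case: ltP => x0.
  rewrite (_ : _ @^-1` _ = set0) ?measure0 //.
  apply/seteqP; split => w //=; rewrite in_itv /= measurable_realfun.mindicE.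
  by case: (w \in A) => /=; lra.
case: ltP => x1.
  rewrite (_ : _ @^-1` _ = ~` A) ?PE ?muC //; first exact: measurableC.
  apply/seteqP; split => w /=; rewrite in_itv /= measurable_realfun.mindicE.
    by case wA: (w \in A) => /=; [lra | move=> _ /mem_set; rewrite wA].
  by move=> nA; rewrite memNset //=; lra.
rewrite (_ : _ @^-1` _ = setT) ?probability_setT //.
apply/seteqP; split => w //= _; rewrite in_itv /= measurable_realfun.mindicE.
by case: (w \in A).
Qed.

Lemma mixable_of_int n (p : 'I_n -> R) (hp : forall i, 0 <= p i <= 1) (k : int) :
  \sum_(i < n) p i = k%:~R -> jointly_mixable P (fun i => bernoulli_cdf (p i)).
Proof.
case: n p hp => [|m] p hp hk.
  exists (fun _ => imf measurable0); split; first by case.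
  exists 0; rewrite (_ : [set w | _] = setT) ?probability_setT //.
  by apply/seteqP; split => w // _; rewrite /= big_ord0.
pose q j := p (inord j).
have hq : forall j, (j <= m)%N -> 0 <= q j <= 1 by move=> j _; exact: hp.
have hs : \sum_(j < m.+1) q j = k%:~R.
  by rewrite -hk; apply: eq_bigr => i _; rewrite /q inord_val.
have [A [hA sA]] := construct hq hs.
have mA (i : 'I_m.+1) : measurable (A i) by case: (hA i (ltn_ord i)).
exists (fun i => imf (mA i)); split.
  move=> i x; rewrite cdf_imf; have [_ ->] := hA i (ltn_ord i).
  by rewrite /q inord_val.
exists k%:~R; rewrite (_ : [set w | _] = setT) ?probability_setT //.
apply/seteqP; split => w // _ /=; rewrite -(sA w).
by apply: eq_bigr => i _.
Qed.

Lemma mpre (X : {RV P >-> R}) (i : interval R) : measurable (X @^-1` [set x | x \in i]).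
Proof. by apply: measurable_funPTI; exact: measurable_itv. Qed.

Lemma cdf_mu (X : {RV P >-> R}) r : cdf X r = (mu (X @^-1` `]-oo, r]))%:E.
Proof. by rewrite /cdf /distribution /pushforward PE //; exact: mpre. Qed.

Lemma ae_null (N : set T) : measurable N -> mu N = 0 -> {ae P, forall w, ~ N w}.
Proof.
move=> mN N0; exists N; split => //; first by rewrite PE // N0.
by move=> w /=; case: (pselect (N w)).
Qed.

Lemma bern_ae (X : {RV P >-> R}) p :
  (forall x, cdf X x = (bernoulli_cdf p x)%:E) -> {ae P, forall w, X w = 0 \/ X w = 1}.
Proof.
move=> hX.
have hc r : mu (X @^-1` `]-oo, r]) = bernoulli_cdf p r by apply: EFin_inj; rewrite -cdf_mu.
have hab a b : a <= b ->
    mu (X @^-1` `]a, b]) = mu (X @^-1` `]-oo, b]) - mu (X @^-1` `]-oo, a]).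
  move=> ab.
  have -> : X @^-1` `]a, b] = X @^-1` `]-oo, b] `\` X @^-1` `]-oo, a].
    apply/seteqP; split => w /=; rewrite !in_itv /=.
      by move=> /andP[aw wb]; split => //; apply/negP; rewrite -ltNge.
    by move=> [wb /negP]; rewrite -ltNge => aw; rewrite aw wb.
  rewrite muD //; try exact: mpre.
  by move=> w /=; rewrite !in_itv /= => h; exact: le_trans h ab.
have h1 : {ae P, forall w, forall m : nat, ~ (X @^-1` `]-oo, - (m.+1%:R)^-1]) w}.
  apply: ae_foralln => m; apply: ae_null; first exact: mpre.
  rewrite hc /bernoulli_cdf ifT //.
have h2 : {ae P, forall w, forall m : nat, ~ (X @^-1` `]0, 1 - (m.+1%:R)^-1]) w}.
  apply: ae_foralln => m; apply: ae_null; first exact: mpre.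
  have u0 : 0 < (m.+1%:R : R)^-1 by rewrite invr_gt0 ltr0Sn.
  have u1 : (m.+1%:R : R)^-1 <= 1 by rewrite invf_le1 ?ltr0Sn // ler1n.
  move: u0 u1; set u := (m.+1%:R : R)^-1 => u0 u1.
  have h01 : 0 <= 1 - u by lra.
  rewrite (hab _ _ h01).
  rewrite !hc /bernoulli_cdf ltxx ltr01 ifF; last by apply/negbTE; rewrite -leNgt; lra.
  rewrite ifT; first by rewrite subrr.
  lra.
have h3 : {ae P, forall w, ~ (X @^-1` `]1, +oo[) w}.
  apply: ae_null; first exact: mpre.
  have -> : X @^-1` `]1, +oo[ = ~` (X @^-1` `]-oo, 1]).
    apply/seteqP; split => w /=; rewrite !in_itv /= ?andbT.
      by move=> h; apply/negP; rewrite -ltNge.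
    by move=> h; rewrite ltNge; apply/negP.
  rewrite muC ?hc; last exact: mpre.
  by rewrite /bernoulli_cdf ltr10 ltxx subrr.
apply: (filterS3 _ _ h1 h2 h3) => w H1 H2 H3.
move: H3; rewrite /= in_itv /= andbT => /negP; rewrite -leNgt => x1.
case: (ltP (X w) 0) => x0.
  have [m hm] := ltr_add_invr x0.
  exfalso; apply: (H1 m); rewrite /= in_itv /=; move: hm; set u := (_^-1); lra.
case: (ltP 0 (X w)) => xp; last by left; apply/eqP; rewrite eq_le xp x0.
right; case: (ltP (X w) 1) => xl; last by apply/eqP; rewrite eq_le x1 xl.
have [m hm] := ltr_add_invr xl.
exfalso; apply: (H2 m); rewrite /= in_itv /= xp /=; move: hm; set u := (_^-1); lra.
Qed.

Lemma ae_ex (Q : T -> Prop) : {ae P, forall w, Q w} -> exists w, Q w.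
Proof.
case=> N [mN PN0 sub]; apply: contrapT => nex.
have TN : setT `<=` N by move=> w _; apply: sub => /= Qw; apply: nex; exists w.
have := mu_le measurableT mN TN.
have : mu N = 0 by apply: EFin_inj; rewrite -PE.
move=> ->; rewrite muT; lra.
Qed.

Lemma mu_oc (X : {RV P >-> R}) a b : a <= b ->
    mu (X @^-1` `]a, b]) = mu (X @^-1` `]-oo, b]) - mu (X @^-1` `]-oo, a]).
Proof.
move=> ab.
have -> : X @^-1` `]a, b] = X @^-1` `]-oo, b] `\` X @^-1` `]-oo, a].
  apply/seteqP; split => w /=; rewrite !in_itv /=.
    by move=> /andP[aw wb]; split => //; apply/negP; rewrite -ltNge.
  by move=> [wb /negP]; rewrite -ltNge => aw; rewrite aw wb.
rewrite muD //; try exact: mpre.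
by move=> w /=; rewrite !in_itv /= => h; exact: le_trans h ab.
Qed.

Lemma int_of_mixable n (p : 'I_n -> R) :
  jointly_mixable P (fun i => bernoulli_cdf (p i)) -> exists k : int, \sum_(i < n) p i = k%:~R.
Proof.
case=> X [hX [c hc]].
have mf : measurable_fun setT (fun w => \sum_(i < n) X i w).
  by apply: measurable_sum => i; exact: measurable_funP.
have mS : measurable [set w | \sum_(i < n) X i w = c].
  have := mf measurableT _ (measurable_set1 c); rewrite setTI.
  by [].
have hsum : {ae P, forall w, \sum_(i < n) X i w = c}.
  exists (~` [set w | \sum_(i < n) X i w = c]); split => //.
    exact: measurableC.
  by rewrite probability_setC // hc subee.
have hall : {ae P, forall w, forall i, X i w = 0 \/ X i w = 1}.
  have := @ae_foralln _ _ _ P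
    (fun (m : nat) (w : T) => forall h : (m < n)%N, X (@Ordinal n m h) w = 0 \/ X (@Ordinal n m h) w = 1).
  move=> /(_ _) H; apply: filterS (H _) => [w Hw i|m].
    by case: i => m h; exact: Hw.
  case: (pselect (m < n)%N) => hm.
    apply: filterS (bern_ae (hX (Ordinal hm))) => w Hw h.
    by rewrite (bool_irrelevance h hm).
  by apply: aeW => w h; exfalso; exact: hm.
have hG : {ae P, forall w, (forall i, X i w = 0 \/ X i w = 1) /\ \sum_(i < n) X i w = c}.
  by apply: filterS2 hall hsum => w a b; split.
have [w [h01 hs]] := ae_ex hG.
pose kn := (\sum_(i < n) nat_of_bool (X i w == 1%R))%N.
have ck : c = (kn%:Z)%:~R.
  rewrite -hs /kn sumMz; apply: eq_bigr => i _.
  by case: (h01 i) => ->; rewrite ?eqxx // eq_sym oner_eq0.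
exists kn%:Z; rewrite -ck.
pose A i := X i @^-1` `]2^-1, 1].
have mA i : measurable (A i) by exact: mpre.
have hb i r : mu (X i @^-1` `]-oo, r]) = bernoulli_cdf (p i) r.
  by apply: EFin_inj; rewrite -cdf_mu.
have PA i : P (A i) = (p i)%:E.
  have h2 : (2^-1 : R) <= 1 by rewrite invf_le1 // ler1n.
  rewrite PE // (mu_oc _ h2).
  rewrite !hb /bernoulli_cdf ltr10 ltxx ifF; last by apply/negbTE; rewrite -leNgt invr_ge0.
  rewrite ifT; last by lra.
  by congr EFin; ring.
have AX i w' : X i w' = 0 \/ X i w' = 1 -> \1_(A i) w' = X i w'.
  rewrite indicE; case => h; rewrite h.
    have nA : ~ A i w'.
      by rewrite /A /= in_itv /= h => /andP[]; rewrite ltNge invr_ge0 ler0n.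
    by rewrite memNset.
  have yA : A i w'.
    by rewrite /A /= in_itv /= h lexx andbT invf_lt1 // ltr1n.
  by rewrite mem_set.
have mI : measurable_fun setT (fun w' => (\sum_(i < n) \1_(A i) w' : R)).
  by apply: measurable_sum => i; exact: measurable_realfun.measurable_indic.
have I1 : (\int[P]_w' (\sum_(i < n) \1_(A i) w' : R)%:E = (\sum_(i < n) p i)%:E)%E.
  under eq_integral do rewrite -sumEFin.
  rewrite ge0_integral_sum //.
  - rewrite -sumEFin; apply: eq_bigr => i _.
    by rewrite integral_indic // setIT; exact: PA.
  - by move=> i; apply/measurable_realfun.measurable_EFinP; exact: measurable_realfun.measurable_indic.
have I2 : (\int[P]_w' (\sum_(i < n) \1_(A i) w' : R)%:E = c%:E)%E.
  rewrite (ae_eq_integral (cst c%:E)) //.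
  - rewrite integral_cst //; transitivity (c%:E * 1)%E; last exact: mule1.
    by congr (_ * _)%E; exact: probability_setT.
  - by apply/measurable_realfun.measurable_EFinP.
  - apply: filterS hG => w' [h01' hs'] _; congr EFin; rewrite -hs'.
    by apply: eq_bigr => i _; exact: AX.
by apply: EFin_inj; rewrite -I1 I2.
Qed.
End S.

Unset Implicit Arguments.

Theorem proposition21 (d : measure_display) (T : measurableType d) (R : realType)
  (P : probability T R) (hP : atomless P) (n : nat) (p : 'I_n -> R)
  (hp : forall i, 0 <= p i <= 1) :
  jointly_mixable P (fun i => bernoulli_cdf (p i)) <->
  exists k : int, \sum_(i < n) p i = k%:~R.
Proof.
split; first exact: int_of_mixable.
by case=> k hk; exact: (mixable_of_int hP hp hk).
Qed.
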